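(* Let $\mathcal G$ be an ample groupoid and define the relation $\rho$ on $A_{\mathbb B}(\mathcal G)$ by $f\,\rho\,g$ iff $\operatorname{Eq}(f,g)=\{\alpha\in\mathcal G: f(\alpha)=g(\alpha)\}$ is dense in $\mathcal G$. Then (1) $\rho$ is a congruence on $A_{\mathbb B}(\mathcal G)$; (2) if in addition $\mathcal G$ is topologically principal, then $\rho$ coincides with the congruence $\equiv$ on $A_{\mathbb B}(\mathcal G)$.
   Context: $\mathbb B=(\{0,1\},\text{or},\text{and})$ is the Boolean semifield. An ample groupoid is a topological groupoid whose unit space $\mathcal G^{(0)}$ is locally compact Hausdorff and totally disconnected and whose source and range maps $s,r$ are local homeomorphisms ($\mathcal G$ need not be Hausdorff). The Steinberg algebra $A_{\mathbb B}(\mathcal G)$ is the set of $\mathbb B$-valued functions on $\mathcal G$ that are finite sums of characteristic functions $1_U$ of compact open bisections, with pointwise addition and convolution $(f*g)(\gamma)=\sum_{\alpha\beta=\gamma}f(\alpha)g(\beta)$. $\mathcal T$ is the set of units $u$ whose isotropy group $\{\gamma:s(\gamma)=r(\gamma)=u\}$ is trivial; $\mathcal G$ is topologically principal if $\mathcal T$ is dense in $\mathcal G^{(0)}$. The relation $\equiv$ is defined by $f\equiv g$ iff $f(\alpha)=g(\alpha)$ for all $\alpha$ with $s(\alpha),r(\alpha)\in\mathcal T$. A congruence is an equivalence relation compatible with addition and with left and right multiplication. *)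

(* Defs.v *)
From mathcomp Require Import all_boot all_order.
From mathcomp Require Import all_classical all_reals all_analysis.
Set Implicit Arguments. Unset Strict Implicit. Unset Printing Implicit Defensive.
Local Open Scope classical_set_scope.

(** Algebraic groupoid: a small category with inverses, described by source,
    range, (partial) multiplication and inverse.  [mul a b] is meaningful only
    when [a], [b] are composable, i.e. [src a = rng b]. *)
Record groupoid (G : Type) := Groupoid {
  src : G -> G;
  rng : G -> G;
  mul : G -> G -> G;
  inv : G -> G;
  src_src : forall a, src (src a) = src a;
  rng_src : forall a, rng (src a) = src a;
  src_rng : forall a, src (rng a) = rng a;
  rng_rng : forall a, rng (rng a) = rng a;
  src_mul : forall a b, src a = rng b -> src (mul a b) = src b;
  rng_mul : forall a b, src a = rng b -> rng (mul a b) = rng a;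
  mulA : forall a b c, src a = rng b -> src b = rng c ->
    mul (mul a b) c = mul a (mul b c);
  mul_rng : forall a, mul (rng a) a = a;
  mul_src : forall a, mul a (src a) = a;
  src_inv : forall a, src (inv a) = rng a;
  rng_inv : forall a, rng (inv a) = src a;
  mulV : forall a, mul a (inv a) = rng a;
  mulVl : forall a, mul (inv a) a = src a
}.

Section Ample.
Variables (G : topologicalType) (g : groupoid G).

Definition units : set G := [set u | src g u = u].

Definition open_in_units (W : set G) : Prop :=
  W `<=` units /\ exists O : set G, open O /\ W = O `&` units.

Definition local_homeo_at (f : G -> G) (U : set G) : Prop :=
  [/\ open U,
      {in U &, injective f},
      {within U, continuous f},
      open_in_units (f @` U) &
      forall V : set G, open V -> open_in_units (f @` (U `&` V))].

Definition local_homeomorphism (f : G -> G) : Prop :=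
  forall x : G, exists U : set G, U x /\ local_homeo_at f U.

Definition topological_groupoid : Prop :=
  {within [set p : G * G | src g p.1 = rng g p.2],
     continuous (fun p : G * G => mul g p.1 p.2)} /\
  continuous (inv g).

Definition units_hausdorff : Prop :=
  forall x y, units x -> units y -> x <> y ->
    exists U V : set G, [/\ open U, open V, U x, V y &
      U `&` V `&` units = set0].

Definition units_locally_compact : Prop :=
  forall x, units x -> exists K : set G, exists W : set G,
    [/\ K `<=` units, compact K, open W, W x & W `&` units `<=` K].

Definition ample : Prop :=
  [/\ topological_groupoid /\ units_hausdorff,
      units_locally_compact,
      totally_disconnected units,
      local_homeomorphism (src g) &
      local_homeomorphism (rng g)].

Definition bisection (U : set G) : Prop :=
  {in U &, injective (src g)} /\ {in U &, injective (rng g)}.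

Definition compact_open_bisection (U : set G) : Prop :=
  [/\ compact U, open U & bisection U].

(** Steinberg algebra over the Boolean semifield: finite sums (= pointwise
    "or") of characteristic functions of compact open bisections *)
Definition steinberg (f : G -> bool) : Prop :=
  exists (n : nat) (U : nat -> set G),
    (forall i, (i < n)%N -> compact_open_bisection (U i)) /\
    forall x, f x = true <-> exists2 i, (i < n)%N & U i x.

Definition Badd (f h : G -> bool) : G -> bool := fun x => f x || h x.

(** convolution over B: (f*h)(γ) = ∑_{αβ=γ} f α h β *)
Definition Bconv (f h : G -> bool) : G -> bool := fun x =>
  `[< exists a b, [/\ src g a = rng g b, mul g a b = x, f a & h b] >].

Definition congruence (R : (G -> bool) -> (G -> bool) -> Prop) : Prop :=
  [/\ (forall f, steinberg f -> R f f),
      (forall f h, steinberg f -> steinberg h -> R f h -> R h f),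
      (forall f h k, steinberg f -> steinberg h -> steinberg k ->
          R f h -> R h k -> R f k) &
      (forall f h k, steinberg f -> steinberg h -> steinberg k -> R f h ->
          [/\ R (Badd f k) (Badd h k),
              R (Bconv k f) (Bconv k h) &
              R (Bconv f k) (Bconv h k)])].

Definition rho (f h : G -> bool) : Prop := dense [set a | f a = h a].

Definition trivial_isotropy : set G :=
  [set u | units u /\ forall a, src g a = u -> rng g a = u -> a = u].

Definition topologically_principal : Prop :=
  forall O : set G, open O -> O `&` units !=set0 ->
    O `&` trivial_isotropy !=set0.

Definition Tequiv (f h : G -> bool) : Prop :=
  forall a, trivial_isotropy (src g a) -> trivial_isotropy (rng g a) ->
    f a = h a.

End Ample.

(* Main.v *)
From Pilot Require Import Defs.
From mathcomp Require Import all_boot all_order.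
From mathcomp Require Import all_classical all_reals all_analysis.
Set Implicit Arguments. Unset Strict Implicit. Unset Printing Implicit Defensive.
Local Open Scope classical_set_scope.

Section T.
Variable (T : topologicalType).

Lemma nbhs_openW (x : T) A : nbhs x A -> exists B, [/\ open B, B x & B `<=` A].
Proof.
move=> /nbhs_interior hA; exists A°; split => //; first exact: open_interior.
  exact: nbhs_singleton hA.
exact: interior_subset.
Qed.

Lemma open_nbhsW (x : T) A : open A -> A x -> nbhs x A.
Proof. by move=> oA Ax; apply: open_nbhs_nbhs. Qed.

Lemma within_cont {U : topologicalType} (A : set T) (f : T -> U) x :
  {within A, continuous f} -> A x -> forall N, nbhs (f x) N ->
  exists B, [/\ open B, B x & forall y, B y -> A y -> N (f y)].
Proof.
move=> /subspace_continuousP /(_ x) h Ax N Nx.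
have := h Ax N Nx. rewrite /within /= => /nbhs_openW [B [oB Bx BN]].
by exists B; split => // y /BN.
Qed.

Lemma prod_nbhs {U : topologicalType} (x : T) (y : U) P : nbhs (x, y) P ->
  exists A B, [/\ nbhs x A, nbhs y B & forall a b, A a -> B b -> P (a, b)].
Proof.
case=> [[A B] /= [hA hB] sub]. exists A, B; split => // a b Aa Bb.
by apply: sub.
Qed.

Lemma dense_sub (S S' : set T) : dense S -> S `<=` S' -> dense S'.
Proof.
move=> dS sub O O0 oO; case: (dS O O0 oO) => x [Ox Sx]; exists x; split=> //.
exact: sub.
Qed.

Lemma dense_openI (D S : set T) : open D -> dense D -> dense S -> dense (D `&` S).
Proof.
move=> oD dD dS O O0 oO; case: (dD O O0 oO) => x [Ox Dx].
case: (dS (O `&` D) (ex_intro _ x (conj Ox Dx)) (openI oO oD)) => y [[Oy Dy] Sy].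
by exists y.
Qed.
Lemma open_from_nbhs (A : set T) : (forall x, A x -> nbhs x A) -> open A.
Proof. by move=> h; rewrite openE => x /h. Qed.
End T.
Section Grp.
Variables (G : topologicalType) (g : groupoid G).
Local Notation s := (src g). Local Notation r := (rng g).
Local Notation mul := (Pilot.Defs.mul g). Local Notation inv := (Pilot.Defs.inv g).

Lemma units_s a : units g (s a). Proof. exact: src_src. Qed.
Lemma units_r a : units g (r a). Proof. exact: src_rng. Qed.

Lemma cancelL a b : s a = r b -> mul (inv a) (mul a b) = b.
Proof.
move=> h; rewrite -mulA ?src_inv // mulVl h; exact: mul_rng.
Qed.
Lemma cancelL' a c : r a = r c -> mul a (mul (inv a) c) = c.
Proof.
move=> h; rewrite -mulA ?rng_inv ?src_inv // mulV h; exact: mul_rng.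
Qed.
Lemma cancelR a b : s b = r a -> mul (mul b a) (inv a) = b.
Proof.
move=> h; rewrite mulA ?rng_inv // mulV -h; exact: mul_src.
Qed.
Lemma cancelR' a c : s c = s a -> mul (mul c (inv a)) a = c.
Proof.
move=> h; rewrite mulA ?rng_inv ?src_inv // mulVl -h; exact: mul_src.
Qed.
End Grp.
Section Top.
Variables (G : topologicalType) (g : groupoid G).
Local Notation s := (src g). Local Notation r := (rng g).
Local Notation mul := (Pilot.Defs.mul g). Local Notation inv := (Pilot.Defs.inv g).

Lemma lh_cont t : local_homeomorphism g t -> continuous t.
Proof.
move=> lh x; case: (lh x) => U [Ux [oU _ cU _ _]].
move: cU; rewrite continuous_open_subspace // => cU.
by apply: cU; rewrite inE.
Qed.

Lemma lh_openmap t U : local_homeomorphism g t -> open U ->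
  open_in_units g (t @` U).
Proof.
move=> lh oU.
have sub : t @` U `<=` units g.
  move=> _ [z Uz <-]; case: (lh z) => W [Wz [_ _ _ _ h]].
  by case: (h U oU) => hsub _; apply: hsub; exists z.
split => //.
exists ([set y | exists O, [/\ open O, O y & O `&` units g `<=` t @` U]]).
split.
  rewrite openE; move=> y [Q [oQ Qy QU]]; apply: (@filterS _ _ _ Q).
    by move=> z Qz; exists Q; split.
  exact: oQ.
apply/seteqP; split.
  move=> _ [z Uz <-]; case: (lh z) => W [Wz [_ _ _ _ h]].
  case: (h U oU) => s1 [Q [oQ e]].
  have tz : (t @` (W `&` U)) (t z) by exists z.
  split; last exact: sub (ex_intro2 _ _ z Uz erefl).
  exists Q; split => //; first by move: tz; rewrite e => -[].
  by rewrite -e => y [w [_ Uw] <-]; exists w.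
by move=> y [[Q [_ Qy QU]] uy]; apply: QU.
Qed.

Lemma mul_cont : topological_groupoid g -> forall a b, s a = r b ->
  forall N, nbhs (mul a b) N -> exists A B, [/\ nbhs a A, nbhs b B &
    forall a' b', A a' -> B b' -> s a' = r b' -> N (mul a' b')].
Proof.
move=> [cm _] a b ab N hN.
have [B [oB Bx BN]] := within_cont cm (x := (a, b)) ab hN.
have [A1 [B1 [hA hB sub]]] := prod_nbhs (open_nbhsW oB Bx).
exists A1, B1; split => // a' b' Aa Bb e.
exact: (BN (a', b') (sub _ _ Aa Bb) e).
Qed.

Lemma inv_cont : topological_groupoid g -> forall a N, nbhs (inv a) N ->
  nbhs a (inv @^-1` N).
Proof. by move=> [_ ci] a N hN; apply: ci. Qed.

Lemma gen_sec (t t' : G -> G) (U : set G) (m : G -> G -> G) :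
  (forall V, open V -> open_in_units g (t @` (U `&` V))) ->
  (forall x, units g (t' x)) -> continuous t' ->
  (forall x a, t a = t' x -> forall N, nbhs (m x a) N ->
     exists C A, [/\ nbhs x C, nbhs a A &
       forall y b, C y -> A b -> t b = t' y -> N (m y b)]) ->
  forall x a, U a -> t a = t' x -> forall N, nbhs (m x a) N ->
  exists M, [/\ open M, M x &
     forall y, M y -> exists b, [/\ U b, t b = t' y & N (m y b)]].
Proof.
move=> HU Ht' ct' Hm x a Ua e N hN.
have [C [A [hC hA sub]]] := Hm x a e N hN.
have [A' [oA' A'a A'A]] := nbhs_openW hA.
have [C' [oC' C'x C'C]] := nbhs_openW hC.
case: (HU A' oA') => _ [Q [oQ eQ]].
have Otx : Q (t' x).
  have : (t @` (U `&` A')) (t a) by exists a.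
  by rewrite eQ e => -[].
exists (C' `&` t' @^-1` Q); split => //.
- apply: openI => //; apply: open_comp => // z _; exact: ct'.
- move=> y [C'y Oy].
  have : (Q `&` units g) (t' y) by split.
  rewrite -eQ => -[b [Ub A'b] tb]; exists b; split => //.
  by apply: sub (C'C _ C'y) (A'A _ A'b) tb.
Qed.
End Top.
Section Inst.
Variables (G : topologicalType) (g : groupoid G).
Local Notation s := (src g). Local Notation r := (rng g).
Local Notation mul := (Pilot.Defs.mul g). Local Notation inv := (Pilot.Defs.inv g).

Lemma Hm_phi : topological_groupoid g -> forall x a, r a = r x -> forall N,
  nbhs (mul (inv a) x) N -> exists C A, [/\ nbhs x C, nbhs a A &
   forall y b, C y -> A b -> r b = r y -> N (mul (inv b) y)].
Proof.
move=> tg x a e N hN.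
have [A1 [B1 [hA hB sub]]] := mul_cont tg (a := inv a) (b := x) (etrans (src_inv _ _) e) hN.
exists B1, (inv @^-1` A1); split => //; first exact: inv_cont.
by move=> y b By Ab eb; apply: sub => //; rewrite src_inv.
Qed.

Lemma Hm_psi : topological_groupoid g -> forall x a, s a = r x -> forall N,
  nbhs (mul a x) N -> exists C A, [/\ nbhs x C, nbhs a A &
   forall y b, C y -> A b -> s b = r y -> N (mul b y)].
Proof.
move=> tg x a e N hN.
have [A1 [B1 [hA hB sub]]] := mul_cont tg e hN.
exists B1, A1; split => // y b By Ab eb; exact: sub.
Qed.

Lemma Hm_phi' : topological_groupoid g -> forall x a, s a = s x -> forall N,
  nbhs (mul x (inv a)) N -> exists C A, [/\ nbhs x C, nbhs a A &
   forall y b, C y -> A b -> s b = s y -> N (mul y (inv b))].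
Proof.
move=> tg x a e N hN.
have e' : s x = r (inv a) by rewrite rng_inv e.
have [A1 [B1 [hA hB sub]]] := mul_cont tg e' hN.
exists A1, (inv @^-1` B1); split => //; first exact: inv_cont.
by move=> y b Ay Bb eb; apply: sub => //; rewrite rng_inv.
Qed.

Lemma Hm_psi' : topological_groupoid g -> forall x a, r a = s x -> forall N,
  nbhs (mul x a) N -> exists C A, [/\ nbhs x C, nbhs a A &
   forall y b, C y -> A b -> r b = s y -> N (mul y b)].
Proof.
move=> tg x a e N hN.
have [A1 [B1 [hA hB sub]]] := mul_cont tg (esym e) hN.
exists A1, B1; split => // y b Ay Bb eb; exact: sub.
Qed.

Lemma stein_lc f : steinberg g f -> exists D, [/\ open D, dense D &
  forall x, D x -> exists W, [/\ open W, W x & forall y, W y -> f y = f x]].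
Proof.
move=> [n [U [hU hf]]].
exists [set x | exists W, [/\ open W, W x & forall y, W y -> f y = f x]].
split.
- apply: open_from_nbhs => x [W [oW Wx Wf]].
  apply: (@filterS _ _ _ W); last exact: open_nbhsW.
  move=> y Wy; exists W; split => // z Wz; rewrite Wf // Wf //.
- move=> O [x0 Ox0] oO.
  case: (pselect (exists i, (i < n)%N /\ exists y, O y /\ U i y)).
    move=> [i [ilt [y [Oy Uy]]]]; exists y; split => //.
    have oU : open (U i) by case: (hU i ilt).
    exists (O `&` U i); split => //; first exact: openI.
    move=> z [Oz Uz]; have -> : f z = true by apply/hf; exists i.
    by apply/esym/hf; exists i.
  move=> nex; exists x0; split => //; exists O; split => // y Oy.
  have fF z : O z -> f z = false.
    move=> Oz; apply/negbTE/negP => /hf [i ilt Uz]; apply: nex.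
    by exists i; split => //; exists z.
  by rewrite (fF y) // (fF x0).
- by [].
Qed.

Lemma rho_good f h : steinberg g f -> steinberg g h -> rho f h ->
  exists D, [/\ open D, dense D & D `<=` [set a | f a = h a]].
Proof.
move=> /stein_lc [D1 [oD1 dD1 lD1]] /stein_lc [D2 [oD2 dD2 lD2]] dE.
exists (D1 `&` D2); split; first exact: openI.
  exact: dense_openI.
move=> x [/lD1 [W1 [oW1 W1x e1]] /lD2 [W2 [oW2 W2x e2]]].
have [y [[W1y W2y] ey]] := dE (W1 `&` W2) (ex_intro _ x (conj W1x W2x)) (openI oW1 oW2).
by rewrite /= -(e1 y W1y) -(e2 y W2y).
Qed.
End Inst.
Section Claim.
Variables (G : topologicalType) (g : groupoid G).
Local Notation s := (src g). Local Notation r := (rng g).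
Local Notation mul := (Pilot.Defs.mul g). Local Notation inv := (Pilot.Defs.inv g).

Lemma claimL (U : set G) (f h : G -> bool) D : ample g ->
  compact_open_bisection g U -> open D -> dense D -> D `<=` [set a | f a = h a] ->
  forall W, open W -> W !=set0 -> exists W', [/\ open W', W' !=set0, W' `<=` W &
   forall y, W' y ->
     ((exists a b, [/\ s a = r b, mul a b = y, U a & f b]) <->
      (exists a b, [/\ s a = r b, mul a b = y, U a & h b]))].
Proof.
move=> [[tg _] _ _ lhs lhr] [_ oU [_ rinj]] oD dD DE W oW [w Ww].
have HUs V : open V -> open_in_units g (s @` (U `&` V)).
  by move=> oV; apply: lh_openmap => //; exact: openI.
have HUr V : open V -> open_in_units g (r @` (U `&` V)).
  by move=> oV; apply: lh_openmap => //; exact: openI.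
have uniq y a b a' b' : U a -> r a = r y -> mul (inv a) y = b ->
    s a' = r b' -> mul a' b' = y -> U a' -> a' = a /\ b' = b.
  move=> Ua ea eb e' eab Ua'.
  have aa : a' = a.
    apply: rinj; rewrite ?inE // ea -eab rng_mul //.
  split => //; rewrite -eb -eab aa; subst a'; by rewrite cancelL.
case: (pselect (exists y0 a0, [/\ W y0, U a0 & r a0 = r y0])); last first.
  move=> nex; exists W; split => //; first by exists w.
  move=> y Wy; split => -[a [b [e eab Ua _]]]; exfalso; apply: nex;
    exists y, a; split => //; by rewrite -eab rng_mul.
move=> [y0 [a0 [Wy0 Ua0 e0]]].
set b0 := mul (inv a0) y0.
have sa0 : s a0 = r b0 by rewrite /b0 rng_mul ?rng_inv // src_inv.
have ab0 : mul a0 b0 = y0 by rewrite /b0 cancelL'.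
have nW : nbhs (mul a0 b0) W by rewrite ab0; exact: open_nbhsW.
have [M [oM Mb0 HM]] := gen_sec HUs (units_r g) (lh_cont lhr)
  (Hm_psi tg) Ua0 sa0 nW.
have [b1 [Mb1 Db1]] := dD M (ex_intro _ b0 Mb0) oM.
have [a1 [Ua1 sa1 Wy1]] := HM b1 Mb1.
set y1 := mul a1 b1.
have ra1 : r a1 = r y1 by rewrite /y1 rng_mul.
have nD : nbhs (mul (inv a1) y1) D by rewrite /y1 cancelL //; exact: open_nbhsW.
have [M' [oM' M'y1 HM']] := gen_sec HUr (units_r g) (lh_cont lhr)
  (Hm_phi tg) Ua1 ra1 nD.
exists (M' `&` W); split.
- exact: openI.
- by exists y1.
- by move=> ? [].
move=> y [M'y Wy]; have [a [Ua ea Db]] := HM' y M'y.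
set b := mul (inv a) y.
have fb := DE _ Db.
have sab : s a = r b by rewrite /b rng_mul ?rng_inv // src_inv.
have abe : mul a b = y by rewrite /b cancelL'.
split => -[a' [b' [e' eab Ua' fb']]]; move: (uniq y a b a' b' Ua ea erefl e' eab Ua') => -[? ?]; subst a' b';
  exists a, b; split => //.
  by rewrite -fb.
by rewrite fb.
Qed.

Lemma claimR (U : set G) (f h : G -> bool) D : ample g ->
  compact_open_bisection g U -> open D -> dense D -> D `<=` [set a | f a = h a] ->
  forall W, open W -> W !=set0 -> exists W', [/\ open W', W' !=set0, W' `<=` W &
   forall y, W' y ->
     ((exists a b, [/\ s a = r b, mul a b = y, f a & U b]) <->
      (exists a b, [/\ s a = r b, mul a b = y, h a & U b]))].
Proof.
move=> [[tg _] _ _ lhs lhr] [_ oU [sinj _]] oD dD DE W oW [w Ww].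
have HUs V : open V -> open_in_units g (s @` (U `&` V)).
  by move=> oV; apply: lh_openmap => //; exact: openI.
have HUr V : open V -> open_in_units g (r @` (U `&` V)).
  by move=> oV; apply: lh_openmap => //; exact: openI.
have uniq y a b a' b' : U b -> s b = s y -> mul y (inv b) = a ->
    s a' = r b' -> mul a' b' = y -> U b' -> b' = b /\ a' = a.
  move=> Ub eb ea e' eab Ub'.
  have bb : b' = b.
    apply: sinj; rewrite ?inE // eb -eab src_mul //.
  split => //; rewrite -ea -eab bb; subst b'; by rewrite cancelR.
case: (pselect (exists y0 b0, [/\ W y0, U b0 & s b0 = s y0])); last first.
  move=> nex; exists W; split => //; first by exists w.
  move=> y Wy; split => -[a [b [e eab _ Ub]]]; exfalso; apply: nex;
    exists y, b; split => //; by rewrite -eab src_mul.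
move=> [y0 [b0 [Wy0 Ub0 e0]]].
set a0 := mul y0 (inv b0).
have sa0 : r b0 = s a0 by rewrite /a0 src_mul ?src_inv // rng_inv.
have ab0 : mul a0 b0 = y0 by rewrite /a0 cancelR'.
have nW : nbhs (mul a0 b0) W by rewrite ab0; exact: open_nbhsW.
have [M [oM Ma0 HM]] := gen_sec HUr (units_s g) (lh_cont lhs)
  (Hm_psi' tg) Ub0 sa0 nW.
have [a1 [Ma1 Da1]] := dD M (ex_intro _ a0 Ma0) oM.
have [b1 [Ub1 sb1 Wy1]] := HM a1 Ma1.
set y1 := mul a1 b1.
have sb1' : s b1 = s y1 by rewrite /y1 src_mul.
have nD : nbhs (mul y1 (inv b1)) D by rewrite /y1 cancelR //; exact: open_nbhsW.
have [M' [oM' M'y1 HM']] := gen_sec HUs (units_s g) (lh_cont lhs)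
  (Hm_phi' tg) Ub1 sb1' nD.
exists (M' `&` W); split.
- exact: openI.
- by exists y1.
- by move=> ? [].
move=> y [M'y Wy]; have [b [Ub eb Da]] := HM' y M'y.
set a := mul y (inv b).
have fa := DE _ Da.
have sab : s a = r b by rewrite /a src_mul ?src_inv // rng_inv.
have abe : mul a b = y by rewrite /a cancelR'.
split => -[a' [b' [e' eab fa' Ub']]]; move: (uniq y a b a' b' Ub eb erefl e' eab Ub') => -[? ?]; subst a' b';
  exists a, b; split => //.
  by rewrite -fa.
by rewrite fa.
Qed.
End Claim.
Lemma iter_shrink (T : topologicalType) (n : nat) (Q : nat -> set T) :
  (forall i, (i < n)%N -> forall W, open W -> W !=set0 ->
     exists W', [/\ open W', W' !=set0, W' `<=` W & W' `<=` Q i]) ->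
  forall O, open O -> O !=set0 -> exists y, O y /\ forall i, (i < n)%N -> Q i y.
Proof.
move=> hQ O oO O0.
have P m : exists W', [/\ open W', W' !=set0, W' `<=` O &
    forall i, (i < m)%N -> (i < n)%N -> W' `<=` Q i].
  elim: m => [|m [W' [oW' W'0 W'O HW']]]; first by exists O; split.
  case: (ltnP m n) => hm.
    have [W'' [oW'' W''0 W''W' W''Q]] := hQ m hm W' oW' W'0.
    exists W''; split => //; first by move=> y /W''W' /W'O.
    move=> i; rewrite ltnS leq_eqVlt => /orP [/eqP -> _ //|im ilt y /W''W'].
    exact: HW'.
  exists W'; split => // i im ilt; apply: HW' => //.
  exact: leq_trans ilt hm.
have [W' [oW' [y W'y] W'O HW']] := P n.
by exists y; split; [exact: W'O | move=> i ilt; exact: HW'].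
Qed.

Section Cong.
Variables (G : topologicalType) (g : groupoid G).
Local Notation s := (src g). Local Notation r := (rng g).
Local Notation mul := (Pilot.Defs.mul g). Local Notation inv := (Pilot.Defs.inv g).

Lemma conv_left f h k : ample g -> steinberg g f -> steinberg g h ->
  steinberg g k -> rho f h -> rho (Bconv g k f) (Bconv g k h).
Proof.
move=> am sf sh [n [U [hU hk]]] fh.
have [D [oD dD DE]] := rho_good sf sh fh.
move=> O O0 oO.
have [y [Oy Hy]] := iter_shrink
  (Q := fun i y => (exists a b, [/\ s a = r b, mul a b = y, U i a & f b]) <->
      (exists a b, [/\ s a = r b, mul a b = y, U i a & h b]))
  (fun i ilt => claimL am (hU i ilt) oD dD DE) oO O0.
exists y; split => //; rewrite /Bconv /=; apply: asbool_equiv_eq.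
split => -[a [b [e eab ka fb]]]; have [i ilt Ua] := (hk a).1 ka.
  have [a' [b' [e' eab' Ua' hb']]] := (Hy i ilt).1 (ex_intro _ a (ex_intro _ b (And4 e eab Ua fb))).
  by exists a', b'; split => //; apply/hk; exists i.
have [a' [b' [e' eab' Ua' hb']]] := (Hy i ilt).2 (ex_intro _ a (ex_intro _ b (And4 e eab Ua fb))).
by exists a', b'; split => //; apply/hk; exists i.
Qed.
End Cong.
Section Cong2.
Variables (G : topologicalType) (g : groupoid G).
Local Notation s := (src g). Local Notation r := (rng g).
Local Notation mul := (Pilot.Defs.mul g). Local Notation inv := (Pilot.Defs.inv g).

Lemma conv_right f h k : ample g -> steinberg g f -> steinberg g h ->
  steinberg g k -> rho f h -> rho (Bconv g f k) (Bconv g h k).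
Proof.
move=> am sf sh [n [U [hU hk]]] fh.
have [D [oD dD DE]] := rho_good sf sh fh.
move=> O O0 oO.
have [y [Oy Hy]] := iter_shrink
  (Q := fun i y => (exists a b, [/\ s a = r b, mul a b = y, f a & U i b]) <->
      (exists a b, [/\ s a = r b, mul a b = y, h a & U i b]))
  (fun i ilt => claimR am (hU i ilt) oD dD DE) oO O0.
exists y; split => //; rewrite /Bconv /=; apply: asbool_equiv_eq.
split => -[a [b [e eab fa kb]]]; have [i ilt Ub] := (hk b).1 kb.
  have [a' [b' [e' eab' ha' Ub']]] := (Hy i ilt).1 (ex_intro _ a (ex_intro _ b (And4 e eab fa Ub))).
  by exists a', b'; split => //; apply/hk; exists i.
have [a' [b' [e' eab' ha' Ub']]] := (Hy i ilt).2 (ex_intro _ a (ex_intro _ b (And4 e eab fa Ub))).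
by exists a', b'; split => //; apply/hk; exists i.
Qed.

Lemma rho_cong : ample g -> congruence g (@rho G).
Proof.
move=> am; split.
- move=> f _ O [x Ox] _; by exists x.
- move=> f h _ _ fh; rewrite /rho in fh *; apply: (dense_sub fh) => x /= ->.
  by [].
- move=> f h k sf sh sk fh hk.
  have [D [oD dD DE]] := rho_good sf sh fh.
  rewrite /rho in hk *; apply: (dense_sub (dense_openI oD dD hk)) => x [/DE /= -> ->].
  by [].
- move=> f h k sf sh sk fh; split.
  + rewrite /rho in fh *; apply: (dense_sub fh) => x /= e; by rewrite /Badd e.
  + exact: conv_left.
  + exact: conv_right.
Qed.
End Cong2.
Lemma fin_compact (T : topologicalType) (n : nat) (V : nat -> set T) :
  (forall j, (j < n)%N -> compact (V j)) ->
  compact [set x | exists2 j, (j < n)%N & V j x].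
Proof.
elim: n => [|n IH] hV.
  have -> : [set x | exists2 j, (j < 0)%N & V j x] = set0.
    by apply/seteqP; split => x // [].
  exact: compact0.
have -> : [set x | exists2 j, (j < n.+1)%N & V j x] =
   [set x | exists2 j, (j < n)%N & V j x] `|` V n.
  apply/seteqP; split => x.
    move=> [j]; rewrite ltnS leq_eqVlt => /orP [/eqP -> Vx|jn Vx].
      by right.
    by left; exists j.
  case=> [[j jn Vx]|Vx]; first by exists j => //; exact: ltnW.
  by exists n.
apply: compactU; last exact: hV.
by apply: IH => j jn; apply: hV; exact: ltnW.
Qed.

Section P2.
Variables (G : topologicalType) (g : groupoid G).
Local Notation s := (src g). Local Notation r := (rng g).
Local Notation mul := (Pilot.Defs.mul g). Local Notation inv := (Pilot.Defs.inv g).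

Lemma T_rng a : trivial_isotropy g (s a) -> trivial_isotropy g (r a).
Proof.
move=> [_ Ts]; split; first exact: units_r.
move=> c sc rc.
have e1 : s c = r a by [].
set d := mul c a.
have sd : s d = s a by rewrite /d src_mul.
have rd : r d = r a by rewrite /d rng_mul.
have e2 : mul (inv a) d = s a.
  apply: Ts.
    by rewrite src_mul ?src_inv // sd.
  by rewrite rng_mul ?rng_inv // src_inv rd.
have da : d = a.
  by rewrite -[LHS](@cancelL' _ g a d (esym rd)) e2 mul_src.
by rewrite -[LHS](@cancelR _ g a c e1) -/d da mulV.
Qed.

Lemma Tequiv_rho f h : ample g -> topologically_principal g ->
  Tequiv g f h -> rho f h.
Proof.
move=> [_ _ _ lhs _] tp Te O [x Ox] oO.
case: (lhs x) => W [Wx [_ _ _ _ hW]].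
case: (hW O oO) => sub [Q [oQ eQ]].
have : (Q `&` units g) !=set0 by exists (s x); rewrite -eQ; exists x.
move=> /(tp Q oQ) [u [Qu Tu]].
have : (s @` (W `&` O)) u by rewrite eQ; split => //; case: Tu.
move=> [a [_ Oa] sa]; exists a; split => //.
apply: Te; first by rewrite sa.
by apply: T_rng; rewrite sa.
Qed.

Lemma clust_eq (t : G -> G) (K : set G) a b : units_hausdorff g ->
  continuous t -> (forall x, units g (t x)) ->
  cluster (within K (nbhs a)) b -> t a = t b.
Proof.
move=> hs ct ut cl; case: (pselect (t a = t b)) => // ne; exfalso.
have [P [Q [oP oQ Pa Qb e0]]] := hs _ _ (ut a) (ut b) ne.
have hA : within K (nbhs a) (t @^-1` P).
  rewrite /within /=; apply: (@filterS _ _ _ (t @^-1` P)).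
    by move=> y Py _.
  exact: (ct a P (open_nbhsW oP Pa)).
have hB : nbhs b (t @^-1` Q) := ct b Q (open_nbhsW oQ Qb).
have [v [Pv Qv]] := cl _ _ hA hB.
have : (P `&` Q `&` units g) (t v) by split; [split|exact: ut].
by rewrite e0.
Qed.

Lemma rho_T_one f h a : ample g -> steinberg g f -> steinberg g h -> rho f h ->
  trivial_isotropy g (r a) -> f a = true -> h a = true.
Proof.
move=> [[[tg _] hs] _ _ lhs lhr] [n1 [U1 [hU1 hf]]] [n [V [hV hh]]] fh Tr fa.
case: (boolP (h a)) => // /negbTE ha; exfalso.
have [i ilt U1a] := (hf a).1 fa.
have oU1 : open (U1 i) by case: (hU1 i ilt).
set K := [set x | exists2 j, (j < n)%N & V j x].
have cK : compact K.
  by apply: fin_compact => j jn; case: (hV j jn).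
have clK : closure K a.
  move=> B /nbhs_openW [B' [oB' B'a B'B]].
  have [y [[B'y U1y] ey]] := fh (B' `&` U1 i) (ex_intro _ a (conj B'a U1a)) (openI oB' oU1).
  exists y; split; last exact: B'B.
  apply/hh; rewrite -ey; apply/hf; by exists i.
have PF := @within_nbhs_proper G K a clK.
have [b [Kb clb]] := cK _ PF (withinT K (@nbhs_filter G a)).
have esb := clust_eq hs (lh_cont lhs) (units_s g) clb.
have erb := clust_eq hs (lh_cont lhr) (units_r g) clb.
have hb : h b = true by apply/hh.
have [_ Ti] := Tr.
have c1 : mul a (inv b) = r a.
  apply: Ti.
    by rewrite src_mul ?rng_inv // src_inv erb.
  by rewrite rng_mul // rng_inv esb.
have ab : a = b.
  by rewrite -[LHS](@cancelR' _ g b a esb) c1 erb mul_rng.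
by move: ha; rewrite ab hb.
Qed.
End P2.

Theorem lemma3p7 (G : topologicalType) (g : groupoid G) :
  ample g ->
  congruence g (@rho G) /\
  (topologically_principal g ->
     forall f h, steinberg g f -> steinberg g h -> (rho f h <-> Tequiv g f h)).
Proof.
move=> am; split; first exact: rho_cong.
move=> tp f h sf sh; split; last exact: Tequiv_rho.
move=> fh a Ts Tr.
have hf : rho h f.
  by rewrite /rho in fh *; apply: (dense_sub fh) => x /= ->.
case: (boolP (f a)) => fa.
  by rewrite (rho_T_one am sf sh fh Tr fa).
case: (boolP (h a)) => ha //.
by move: fa; rewrite (rho_T_one am sh sf hf Tr ha).
Qed.
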